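(* Let $\{X_i\mid i\in I\}$ be a family of $T_0$-spaces. If the product space $\prod_{i\in I}X_i$ is a $d^{\ast}$-space, then each $X_i$ is a $d^{\ast}$-space.
   Context: All spaces are $T_0$. The specialization order of a space $X$ is given by $x\le y$ iff $x\in cl(\{y\})$; ${\uparrow}$ is taken with respect to it. A $T_0$-space $X$ is a $d^{\ast}$-space if for every directed $D\subseteq X$ (in the specialization order), every $x\in X$ and every nonempty open $U\subseteq X$, $\bigcap_{d\in D}{\uparrow}d\cap{\uparrow}x\subseteq U$ implies ${\uparrow}d\cap{\uparrow}x\subseteq U$ for some $d\in D$. *)

(* Defs.v *)
From HB Require Import structures.
From mathcomp Require Import all_boot all_order all_algebra.
From mathcomp Require Import all_classical all_reals all_analysis.
Set Implicit Arguments. Unset Strict Implicit. Unset Printing Implicit Defensive.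
Local Open Scope classical_set_scope.

Definition spec_le (T : topologicalType) (x y : T) : Prop := closure [set y] x.

Definition upset (T : topologicalType) (x : T) : set T := [set y | spec_le x y].

Definition spec_directed (T : topologicalType) (D : set T) : Prop :=
  D !=set0 /\
  forall a b, D a -> D b -> exists2 c, D c & spec_le a c /\ spec_le b c.

Definition d_star_space (T : topologicalType) : Prop :=
  forall (D : set T), spec_directed D ->
  forall (x : T) (U : set T), open U -> U !=set0 ->
    (\bigcap_(d in D) upset d) `&` upset x `<=` U ->
    exists2 d, D d & upset d `&` upset x `<=` U.

(* Main.v *)
Require Import Defs.
From HB Require Import structures.
From mathcomp Require Import all_boot all_order all_algebra.
From mathcomp Require Import all_classical all_reals all_analysis.
Local Open Scope classical_set_scope.

Lemma cont_spec (S T : topologicalType) (f : S -> T) (x y : S) :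
  continuous f -> spec_le x y -> spec_le (f x) (f y).
Proof.
move=> cf hxy B hB.
have := hxy (f @^-1` B) (cf x B hB).
by move=> [z [/= -> hz]]; exists (f y).
Qed.

Theorem mainTheorem3 (I : Type) (X : I -> topologicalType) :
  (forall i, kolmogorov_space (X i)) ->
  (forall i, inhabited (X i)) ->
  d_star_space (prod_topology X) ->
  forall i, d_star_space (X i).
Proof.
move=> _ inh hP i.
pose J : eqType := {classic I}.
pose K : J -> topologicalType := X.
have ex : forall j, exists x : X j, True by move=> j; case: (inh j) => x; exists x.
pose a : prod_topology K := fun j => projT1 (cid (ex j)).
change (d_star_space (prod_topology K)) in hP.
change (d_star_space (K i)).
pose e : K i -> prod_topology K := @dfwith J K a i.
have ce : continuous e := @dfwith_continuous J K a i.
have cp : continuous (@proj J K i : prod_topology K -> K i) := @proj_continuous J K i.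
have pe : forall x, proj i (e x) = x by move=> x; exact: projK.
move=> D [[d0 Dd0] Ddir] x U oU U0 hU.
have dir : spec_directed (e @` D).
  split; first by exists (e d0); exists d0.
  move=> _ _ [p Dp <-] [q Dq <-].
  have [c Dc [pc qc]] := Ddir p q Dp Dq.
  by exists (e c); [exists c | split; apply: cont_spec].
pose V : set (prod_topology K) := (@proj J K i) @^-1` U.
have oV : open V by exact: open_comp (fun f _ => cp f) oU.
have V0 : V !=set0.
  by case: U0 => u Uu; exists (e u); rewrite /V /= pe.
have inc : \bigcap_(d in e @` D) upset d `&` upset (e x) `<=` V.
  move=> f [Hf Hx]; rewrite /V /=; apply: hU; split.
    move=> d Dd; rewrite -(pe d); apply: cont_spec => //.
    by apply: Hf; exists d.
  by rewrite -(pe x); apply: cont_spec.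
have [_ [d Dd <-] H] := hP (e @` D) dir (e x) V oV V0 inc.
exists d => // y [Hd Hx].
rewrite -(pe y); apply: (H (e y)); split; exact: cont_spec.
Qed.
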